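(* Let $\boldsymbol{\phi}\in\mathcal{D}_{\boldsymbol{\phi}}(\boldsymbol{r})$. If for all $i\in\mathcal{V}$, $j\in\{0\}\cup\mathcal{V}$ and $(a,k)\in\mathcal{S}$, $$\delta_{ij}(a,k)\begin{cases}=\min_{j'\in\{0\}\cup\mathcal{V}}\delta_{ij'}(a,k), & \text{if }\phi_{ij}(a,k)>0,\\ \ge\min_{j'\in\{0\}\cup\mathcal{V}}\delta_{ij'}(a,k), & \text{if }\phi_{ij}(a,k)=0,\end{cases}$$ then $\boldsymbol{\phi}$ is a global optimal solution of $\min_{\boldsymbol{\phi}\in\mathcal{D}_{\boldsymbol{\phi}}(\boldsymbol{r})}T(\boldsymbol{\phi})$.
   Context: Service-chain computing network model. $\mathcal{G}=(\mathcal{V},\mathcal{E})$ is a directed, strongly connected graph whose links are bidirectional ($(i,j)\in\mathcal{E}\Rightarrow(j,i)\in\mathcal{E}$). $\mathcal{A}$ is a finite set of applications; application $a$ has a destination $d_a\in\mathcal{V}$ and a chain of $|\mathcal{T}_a|$ tasks performed in order. The set of stages is $\mathcal{S}=\{(a,k): a\in\mathcal{A}, k=0,1,\dots,|\mathcal{T}_a|\}$; stage $(a,k)$ denotes packets that have completed the first $k$ tasks of $a$, and has packet size $L_{(a,k)}>0$. Exogenous input rates are $r_i(a)\ge 0$ (stage $(a,0)$ packets injected at node $i$), $\boldsymbol{r}=[r_i(a)]$. The forwarding strategy $\boldsymbol{\phi}=[\phi_{ij}(a,k)]_{(a,k)\in\mathcal{S},i\in\mathcal{V},j\in\{0\}\cup\mathcal{V}}$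 has $\phi_{ij}(a,k)\in[0,1]$; for $j\in\mathcal{V}$ it is the fraction of node $i$'s stage-$(a,k)$ traffic sent to node $j$ (with $\phi_{ij}(a,k)=0$ if $(i,j)\notin\mathcal{E}$), and $\phi_{i0}(a,k)$ is the fraction sent to $i$'s local processor, which converts each stage-$(a,k)$ packet into one stage-$(a,k+1)$ packet; $\phi_{i0}(a,|\mathcal{T}_a|)=0$. Flow conservation: $\sum_{j\in\{0\}\cup\mathcal{V}}\phi_{ij}(a,k)=0$ if $k=|\mathcal{T}_a|$ and $i=d_a$, and $=1$ otherwise. Traffic $t_i(a,k)$ satisfies $t_i(a,0)=\sum_{j\in\mathcal{V}}t_j(a,0)\phi_{ji}(a,0)+r_i(a)$ and, for $k\ge1$, $t_i(a,k)=\sum_{j\in\mathcal{V}}t_j(a,k)\phi_{ji}(a,k)+t_i(a,k-1)\phi_{i0}(a,k-1)$. Link flows $f_{ij}(a,k)=t_i(a,k)\phi_{ij}(a,k)$, processor inputs $g_i(a,k)=t_i(a,k)\phi_{i0}(a,k)$, total link flow $F_{ij}=\sum_{(a,k)\in\mathcal{S}}L_{(a,k)}f_{ij}(a,k)$, computation workload $G_i=\sum_{(a,k)\in\mathcal{S}}w_i(a,k)g_i(a,k)$ with weights $w_i(a,k)>0$. Link costs $D_{ij}(\cdot)$ and computation costs $C_i(\cdot)$ are increasing, continuously differentiable, convex functions (possibly taking value $+\infty$ outside a domain). Total cost $T(\boldsymbol{\phi})=\sum_{(i,j)\in\mathcal{E}}D_{ij}(F_{ij})+\sum_{i\in\mathcal{V}}C_i(G_i)$.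 The feasible set $\mathcal{D}_{\boldsymbol{\phi}}(\boldsymbol{r})$ consists of $\boldsymbol{\phi}$ satisfying flow conservation with all $D_{ij}(F_{ij})<\infty$ and $C_i(G_i)<\infty$; $\boldsymbol{r}$ is such that this set is nonempty. Marginal quantities: $\partial T/\partial t_i(a,k)$ is the marginal total cost of an additional exogenous injection of stage-$(a,k)$ traffic at node $i$ (with $\boldsymbol{\phi}$ fixed); it satisfies $\partial T/\partial t_{d_a}(a,|\mathcal{T}_a|)=0$, for $k=|\mathcal{T}_a|$: $\frac{\partial T}{\partial t_i(a,k)}=\sum_{j\in\mathcal{V}}\phi_{ij}(a,k)\big(L_{(a,k)}D'_{ij}(F_{ij})+\frac{\partial T}{\partial t_j(a,k)}\big)$, and for $k<|\mathcal{T}_a|$: $\frac{\partial T}{\partial t_i(a,k)}=\phi_{i0}(a,k)\big(w_i(a,k)C'_i(G_i)+\frac{\partial T}{\partial t_i(a,k+1)}\big)+\sum_{j\in\mathcal{V}}\phi_{ij}(a,k)\big(L_{(a,k)}D'_{ij}(F_{ij})+\frac{\partial T}{\partial t_j(a,k)}\big)$. Modified marginals: $\delta_{ij}(a,k)=L_{(a,k)}D'_{ij}(F_{ij})+\frac{\partial T}{\partial t_j(a,k)}$ for $j\in\mathcal{V}$ with $(i,j)\in\mathcal{E}$, $\delta_{i0}(a,k)=w_i(a,k)C'_i(G_i)+\frac{\partial T}{\partial t_i(a,k+1)}$ for $k<|\mathcal{T}_a|$, and $\delta_{ij}(a,k)=\infty$ for $(i,j)\notin\mathcal{E}$ and $\delta_{i0}(a,|\mathcal{T}_a|)=\infty$.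 *)

(* Defs.v *)
From HB Require Import structures.
From mathcomp Require Import all_boot all_order all_algebra.
From mathcomp Require Import reals constructive_ereal.
Set Implicit Arguments. Unset Strict Implicit. Unset Printing Implicit Defensive.
Import Order.TTheory GRing.Theory Num.Theory.
Local Open Scope ring_scope.

Section CostFunctions.
Variable R : realType.

Definition deriv_within (f : R -> R) (dom : R -> Prop) (x d : R) : Prop :=
  forall e : R, 0 < e -> exists2 del : R, 0 < del &
    forall y, dom y -> y != x -> `|y - x| < del ->
      `|(f y - f x) / (y - x) - d| < e.

Definition cont_within (g : R -> R) (dom : R -> Prop) (x : R) : Prop :=
  forall e : R, 0 < e -> exists2 del : R, 0 < del &
    forall y, dom y -> `|y - x| < del -> `|g y - g x| < e.

(* A cost function R -> R U {+oo}: it is finite exactly on dom, given by f there;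
   f' is its derivative.  Increasing, continuously differentiable, convex
   (the effective domain of a convex extended function is convex). *)
Definition cost_fun (f : R -> R) (dom : R -> Prop) (f' : R -> R) : Prop :=
  [/\ (forall x y l, dom x -> dom y -> 0 <= l <= 1 -> dom (l * x + (1 - l) * y)),
      (forall x y l, dom x -> dom y -> 0 <= l <= 1 ->
          f (l * x + (1 - l) * y) <= l * f x + (1 - l) * f y),
      (forall x y, dom x -> dom y -> x < y -> f x < f y),
      (forall x, dom x -> deriv_within f dom x (f' x)) &
      (forall x, dom x -> cont_within f' dom x)].
End CostFunctions.

Section Model.
Variable R : realType.
Variables (V A : finType).
Variable E : rel V.
Variable dest : A -> V.
Variable K : A -> nat.           (* |T_a|; stages (a,k) with k <= K a *)
Variable L : A -> nat -> R.      (* packet sizes L_(a,k) *)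
Variable w : V -> A -> nat -> R. (* computation weights w_i(a,k) *)
Variable r : V -> A -> R.        (* exogenous input rates r_i(a) *)

(* phi i (Some j) a k = phi_ij(a,k); phi i None a k = phi_i0(a,k) *)
Definition strategy := V -> option V -> A -> nat -> R.

Definition valid_strategy (phi : strategy) : Prop :=
  [/\ (forall i j a k, (k <= K a)%N -> 0 <= phi i j a k <= 1),
      (forall i j a k, (k <= K a)%N -> ~~ E i j -> phi i (Some j) a k = 0),
      (forall i a, phi i None a (K a) = 0) &
      (forall i a k, (k <= K a)%N ->
         \sum_(j : option V) phi i j a k =
           (if (k == K a) && (i == dest a) then 0 else 1))].

Definition is_traffic (phi : strategy) (t : V -> A -> nat -> R) : Prop :=
  [/\ (forall i a k, (k <= K a)%N -> 0 <= t i a k),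
      (forall i a, t i a 0%N = \sum_(j : V) t j a 0%N * phi j (Some i) a 0%N + r i a) &
      (forall i a k, (1 <= k <= K a)%N ->
         t i a k = \sum_(j : V) t j a k * phi j (Some i) a k
                   + t i a k.-1 * phi i None a k.-1)].

Definition linkF (phi : strategy) (t : V -> A -> nat -> R) (i j : V) : R :=
  \sum_(a : A) \sum_(k < (K a).+1) L a k * (t i a k * phi i (Some j) a k).

Definition compG (phi : strategy) (t : V -> A -> nat -> R) (i : V) : R :=
  \sum_(a : A) \sum_(k < (K a).+1) w i a k * (t i a k * phi i None a k).

Variables (D : V -> V -> R -> R) (Ddom : V -> V -> R -> Prop) (D' : V -> V -> R -> R).
Variables (C : V -> R -> R) (Cdom : V -> R -> Prop) (C' : V -> R -> R).

Definition total_cost (phi : strategy) (t : V -> A -> nat -> R) : R :=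
  \sum_(i : V) \sum_(j : V | E i j) D i j (linkF phi t i j)
  + \sum_(i : V) C i (compG phi t i).

(* phi (with its traffic t) lies in D_phi(r): conservation and finite costs *)
Definition feasible (phi : strategy) (t : V -> A -> nat -> R) : Prop :=
  [/\ valid_strategy phi, is_traffic phi t,
      (forall i j, E i j -> Ddom i j (linkF phi t i j)) &
      (forall i, Cdom i (compG phi t i))].

(* p i a k = dT/dt_i(a,k) : the marginal-cost recursion *)
Definition is_marginal (phi : strategy) (t : V -> A -> nat -> R)
    (p : V -> A -> nat -> R) : Prop :=
  [/\ (forall a, p (dest a) a (K a) = 0),
      (forall i a, p i a (K a) =
         \sum_(j : V) phi i (Some j) a (K a) *
            (L a (K a) * D' i j (linkF phi t i j) + p j a (K a))) &
      (forall i a k, (k < K a)%N ->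
         p i a k = phi i None a k * (w i a k * C' i (compG phi t i) + p i a k.+1)
                 + \sum_(j : V) phi i (Some j) a k *
                     (L a k * D' i j (linkF phi t i j) + p j a k))].

Definition delta (phi : strategy) (t : V -> A -> nat -> R) (p : V -> A -> nat -> R)
    (i : V) (j : option V) (a : A) (k : nat) : \bar R :=
  match j with
  | Some j => if E i j then (L a k * D' i j (linkF phi t i j) + p j a k)%:E
              else +oo%E
  | None => if (k < K a)%N then (w i a k * C' i (compG phi t i) + p i a k.+1)%:E
            else +oo%E
  end.

Definition min_delta (phi : strategy) (t : V -> A -> nat -> R) (p : V -> A -> nat -> R)
    (i : V) (a : A) (k : nat) : \bar R :=
  \big[Order.min/+oo%E]_(j' : option V) delta phi t p i j' a k.

End Model.

(* Main.v *)
Require Import Defs.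
From HB Require Import structures.
From mathcomp Require Import all_boot all_order all_algebra.
From mathcomp Require Import reals constructive_ereal.
From mathcomp Require Import ring lra.
Import Order.TTheory GRing.Theory Num.Theory.
Local Open Scope ring_scope.
Lemma grad (R : realType) (f : R -> R) dom f' x y :
  cost_fun f dom f' -> dom x -> dom y -> f x + f' x * (y - x) <= f y.
Proof.
case=> Hcv Hcx _ Hd _ dx dy.
have [->|nxy] := eqVneq y x; first by rewrite subrr mulr0 addr0.
rewrite leNgt; apply/negP => Hlt.
set gap := f x + f' x * (y - x) - f y.
have gp : 0 < gap by rewrite /gap subr_gt0.
have ap : 0 < `|y - x| by rewrite normr_gt0 subr_eq0.
have [del delp Hdel] := Hd x dx (gap / `|y - x|) (divr_gt0 gp ap).
set l := Num.min 1 (del / (2 * `|y - x|)).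
have lp : 0 < l by rewrite /l lt_min ltr01 /= divr_gt0 // mulr_gt0.
have l1 : l <= 1 by rewrite /l ge_min lexx.
have l2 : l <= del / (2 * `|y - x|) by rewrite /l ge_min lexx orbT.
set z := l * y + (1 - l) * x.
have dz : dom z by apply: Hcv => //; rewrite (ltW lp) l1.
have fz : f z <= l * f y + (1 - l) * f x by apply: Hcx => //; rewrite (ltW lp) l1.
have zx : z - x = l * (y - x) by rewrite /z; ring.
have yx0 : y - x != 0 by rewrite subr_eq0.
have nzx : z != x by rewrite -subr_eq0 zx mulf_neq0 // (gt_eqF lp).
have nz : `|z - x| < del.
  rewrite zx normrM gtr0_norm //.
  apply: (le_lt_trans (ler_wpM2r (ltW ap) l2)).
  have e : del / (2 * `|y - x|) * `|y - x| = del / 2.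
    by field; rewrite (gt_eqF ap).
  rewrite e; lra.
have H := Hdel z dz nzx nz.
have zx0 : z - x != 0 by rewrite subr_eq0.
have H3 : `|f z - f x - f' x * (z - x)| < l * gap.
  have -> : f z - f x - f' x * (z - x) = ((f z - f x)/(z - x) - f' x) * (z - x) by field.
  rewrite normrM.
  have -> : l * gap = gap / `|y-x| * `|z - x|.
    by rewrite zx normrM (gtr0_norm lp); field; rewrite (gt_eqF ap).
  by rewrite ltr_pM2r // normr_gt0.
case/ltr_normlP: H3 => H4 _.
rewrite zx /gap in H4.
nra.
Qed.
Lemma sum_option (R : nmodType) (V : finType) (f : option V -> R) :
  \sum_(j : option V) f j = f None + \sum_(j : V) f (Some j).
Proof.
rewrite (bigD1 None) //=; congr (_ + _).
rewrite (@reindex_omap _ _ _ _ _ Some (fun x => x)); last by case.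
by apply: eq_bigl => j; rewrite eqxx.
Qed.

Lemma swap4 (R : nmodType) (I J B : finType) (n : B -> nat)
  (F : I -> J -> B -> nat -> R) :
  \sum_(i : I) \sum_(j : J) \sum_(a : B) \sum_(k < n a) F i j a k =
  \sum_(a : B) \sum_(k < n a) \sum_(i : I) \sum_(j : J) F i j a k.
Proof.
under eq_bigr do rewrite exchange_big.
rewrite exchange_big; apply: eq_bigr => a _.
under eq_bigr do rewrite exchange_big.
by rewrite exchange_big.
Qed.

Lemma swap3 (R : nmodType) (I B : finType) (n : B -> nat)
  (F : I -> B -> nat -> R) :
  \sum_(i : I) \sum_(a : B) \sum_(k < n a) F i a k =
  \sum_(a : B) \sum_(k < n a) \sum_(i : I) F i a k.
Proof.
rewrite exchange_big; apply: eq_bigr => a _.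
by rewrite exchange_big.
Qed.

Definition Qf (R : realType) (V A : finType) (L : A -> nat -> R)
  (w : V -> A -> nat -> R) (psi : strategy R V A) (c : V -> V -> R) (g : V -> R)
  (p : V -> A -> nat -> R) (i : V) (a : A) (k : nat) : R :=
  \sum_(j : V) psi i (Some j) a k * (L a k * c i j + p j a k)
  + psi i None a k * (w i a k * g i + p i a k.+1).
Arguments Qf {R V A}.

Lemma telesc (R : ringType) (n : nat) (P2 T : nat -> R) (R0 : R) :
  P2 n = 0 -> (forall k, T k = if k == 0%N then R0 else P2 k.-1) ->
  \sum_(k < n.+1) P2 k - \sum_(k < n.+1) T k = - R0.
Proof.
move=> Hn HT.
rewrite big_ord_recr /= Hn addr0 big_ord_recl /= HT /=.
under [X in _ - (_ + X)]eq_bigr => k _ do rewrite HT /=.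
rewrite opprD addrCA.
have -> : \sum_(i < n) P2 (widen_ord (leqnSn n) i) = \sum_(i < n) P2 i by [].
by rewrite subrr addr0.
Qed.

Lemma per_a (R : realType) (V A : finType) (K : A -> nat) (L : A -> nat -> R)
  (w : V -> A -> nat -> R) (r : V -> A -> R) (psi : strategy R V A)
  (s : V -> A -> nat -> R) (c : V -> V -> R) (g : V -> R) (p : V -> A -> nat -> R) (a : A) :
  (forall i, psi i None a (K a) = 0) ->
  is_traffic K r psi s ->
  \sum_(k < (K a).+1) (\sum_(i : V) \sum_(j : V) s i a k * psi i (Some j) a k * (L a k * c i j)
     + \sum_(i : V) s i a k * psi i None a k * (w i a k * g i)) =
  \sum_(i : V) r i a * p i a 0%N +
  \sum_(k < (K a).+1) \sum_(i : V) s i a k * (Qf L w psi c g p i a k - p i a k).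
Proof.
move=> HK [_ Ht0 Ht].
set P1 := fun k : nat => \sum_(i : V) \sum_(j : V) s i a k * psi i (Some j) a k * p j a k.
set P2 := fun k : nat => \sum_(i : V) s i a k * psi i None a k * p i a k.+1.
set S := fun k : nat => \sum_(i : V) s i a k * p i a k.
set R0 := \sum_(i : V) r i a * p i a 0%N.
set T := fun k : nat => if k == 0%N then R0 else P2 k.-1.
have HQ : forall k : nat, \sum_(i : V) s i a k * (Qf L w psi c g p i a k - p i a k) =
   (\sum_(i : V) \sum_(j : V) s i a k * psi i (Some j) a k * (L a k * c i j)
     + \sum_(i : V) s i a k * psi i None a k * (w i a k * g i)) + (P1 k + P2 k - S k).
  move=> k; rewrite /P1 /P2 /S /Qf; cbv beta.
  rewrite [RHS](_ : _ = \sum_(i : V) (\sum_(j : V) s i a k * psi i (Some j) a k * (L a k * c i j)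
     + s i a k * psi i None a k * (w i a k * g i) + (\sum_(j : V) s i a k * psi i (Some j) a k * p j a k
     + s i a k * psi i None a k * p i a k.+1 - s i a k * p i a k))); last first.
    by rewrite big_split big_split sumrB big_split.
  apply: eq_bigr => i _ /=.
  have e1 : \sum_(j : V) s i a k * psi i (Some j) a k * (L a k * c i j) =
    s i a k * \sum_(j : V) psi i (Some j) a k * (L a k * c i j).
    by rewrite mulr_sumr; apply: eq_bigr => j _; ring.
  have e2 : \sum_(j : V) s i a k * psi i (Some j) a k * p j a k =
    s i a k * \sum_(j : V) psi i (Some j) a k * p j a k.
    by rewrite mulr_sumr; apply: eq_bigr => j _; ring.
  have e3 : \sum_(j : V) psi i (Some j) a k * (L a k * c i j + p j a k) =
    \sum_(j : V) psi i (Some j) a k * (L a k * c i j) + \sum_(j : V) psi i (Some j) a k * p j a k.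
    by rewrite -big_split; apply: eq_bigr => j _ /=; ring.
  rewrite e1 e2 e3; ring.
have HS : forall k : nat, (k <= K a)%N -> S k = P1 k + T k.
  move=> k hk; rewrite /S /P1 /T; cbv beta.
  case: (posnP k) => [->|kpos].
    rewrite /= /R0.
    under eq_bigr => i _ do rewrite Ht0.
    rewrite exchange_big /= -big_split; apply: eq_bigr => i _ /=.
    rewrite mulrDl mulr_suml; congr (_ + _); apply: eq_bigr => j _; ring.
  rewrite ?(gtn_eqF kpos) /P2; cbv beta.
  under eq_bigr => i _ do rewrite Ht ?kpos //.
  rewrite exchange_big /= -big_split; apply: eq_bigr => i _ /=.
  rewrite mulrDl mulr_suml prednK //; congr (_ + _); try (apply: eq_bigr => j _); ring.
under [in RHS]eq_bigr => k _ do rewrite HQ.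
rewrite [in RHS]big_split /=.
have -> : \sum_(k < (K a).+1) (P1 k + P2 k - S k) = \sum_(k < (K a).+1) (P2 k - T k).
  apply: eq_bigr => k _; rewrite HS; last by rewrite -ltnS ltn_ord.
  ring.
rewrite sumrB (@telesc _ _ P2 T R0) //.
- ring.
- by rewrite /P2; apply: big1 => i _; rewrite HK mulr0 mul0r.
Qed.
Lemma kkt (R : realType) (X : finType) (dr : X -> R) (cond : X -> bool) (f f' : X -> R) :
  (forall j, 0 <= f j) -> (forall j, 0 <= f' j) ->
  (forall j, ~~ cond j -> f j = 0) -> (forall j, ~~ cond j -> f' j = 0) ->
  \sum_j f j = \sum_j f' j ->
  (forall j, 0 < f j -> (if cond j then (dr j)%:E else +oo%E) =
     \big[Order.min/+oo%E]_(j' : X) (if cond j' then (dr j')%:E else +oo%E)) ->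
  \sum_j f j * dr j <= \sum_j f' j * dr j.
Proof.
move=> f0 f'0 fc f'c fs Hm.
set m := \big[Order.min/+oo%E]_(j' : X) (if cond j' then (dr j')%:E else +oo%E).
have [j0 pj0|allz] := pickP (fun j => 0 < f j).
  have cj0 : cond j0 by apply/negP => /negP /fc H; rewrite H ltxx in pj0.
  have em := Hm j0 pj0; rewrite cj0 -/m in em.
  have e1 : \sum_j f j * dr j = \sum_j f j * dr j0.
    apply: eq_bigr => j _.
    have [fz|fp] := eqVneq (f j) 0; first by rewrite fz !mul0r.
    have pj : 0 < f j by rewrite lt_def fp f0.
    have cj : cond j by apply/negP => /negP /fc H; rewrite H ltxx in pj.
    have := Hm j pj; rewrite cj -/m -em => /eqP; rewrite eqe => /eqP ->. done.
  rewrite e1 -mulr_suml fs mulr_suml; apply: ler_sum => j _.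
  have [fz|fp] := eqVneq (f' j) 0; first by rewrite fz !mul0r.
  have cj : cond j by apply/negP => /negP /f'c H; rewrite H eqxx in fp.
  apply: ler_wpM2l => //.
  have := bigmin_le (+oo%E) j (fun j' => if cond j' then (dr j')%:E else +oo%E).
  by rewrite -/m -em cj lee_fin.
have fz : forall j, f j = 0.
  move=> j; have := allz j; move/negbT; rewrite -leNgt => h.
  by apply/eqP; rewrite eq_le h f0.
have : \sum_j f j = 0 by apply: big1 => j _.
rewrite fs => /eqP; rewrite psumr_eq0 ?(fun j _ => f'0 j) // => /allP f'z.
rewrite big1 ?[X in _ <= X]big1 //.
  by move=> j _; rewrite (eqP (f'z j (mem_index_enum _))) mul0r.
by move=> j _; rewrite fz mul0r.
Qed.

Lemma sum_gradD (R : realType) (V A : finType) : True. Proof. by []. Qed.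

Lemma linkF0 (R : realType) (V A : finType) (E : rel V) (dest : A -> V) (K : A -> nat)
  (L : A -> nat -> R) (psi : strategy R V A) (s : V -> A -> nat -> R) i j :
  valid_strategy E dest K psi -> ~~ E i j -> linkF K L psi s i j = 0.
Proof.
case=> _ H1 _ _ nE; rewrite /linkF; apply: big1 => a _; apply: big1 => k _.
by rewrite H1 ?mulr0 // -ltnS ltn_ord.
Qed.

Lemma lin_ident (R : realType) (V A : finType) (K : A -> nat) (L : A -> nat -> R)
  (w : V -> A -> nat -> R) (r : V -> A -> R) (psi : strategy R V A)
  (s : V -> A -> nat -> R) (c : V -> V -> R) (g : V -> R) (p : V -> A -> nat -> R) :
  (forall i a, psi i None a (K a) = 0) ->
  is_traffic K r psi s ->
  \sum_(i : V) \sum_(j : V) c i j * linkF K L psi s i j + \sum_(i : V) g i * compG K w psi s i =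
  \sum_(a : A) (\sum_(i : V) r i a * p i a 0%N +
  \sum_(k < (K a).+1) \sum_(i : V) s i a k * (Qf L w psi c g p i a k - p i a k)).
Proof.
move=> HK Ht.
transitivity (\sum_(a : A) \sum_(k < (K a).+1)
   (\sum_(i : V) \sum_(j : V) s i a k * psi i (Some j) a k * (L a k * c i j)
     + \sum_(i : V) s i a k * psi i None a k * (w i a k * g i))); last first.
  by apply: eq_bigr => a _; apply: per_a.
under [in RHS]eq_bigr do rewrite big_split.
rewrite [in RHS]big_split /=; congr (_ + _).
  rewrite /linkF.
  transitivity (\sum_(i : V) \sum_(j : V) \sum_(a : A) \sum_(k < (K a).+1)
     s i a k * psi i (Some j) a k * (L a k * c i j)); last first.
    exact: (@swap4 _ _ _ _ (fun a => (K a).+1)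
      (fun i j a k => s i a k * psi i (Some j) a k * (L a k * c i j))).
  apply: eq_bigr => i _; apply: eq_bigr => j _; rewrite mulr_sumr.
  apply: eq_bigr => a _; rewrite mulr_sumr; apply: eq_bigr => k _; ring.
rewrite /compG.
transitivity (\sum_(i : V) \sum_(a : A) \sum_(k < (K a).+1)
   s i a k * psi i None a k * (w i a k * g i)); last first.
  exact: (@swap3 _ _ _ (fun a => (K a).+1)
      (fun i a k => s i a k * psi i None a k * (w i a k * g i))).
apply: eq_bigr => i _; rewrite mulr_sumr.
apply: eq_bigr => a _; rewrite mulr_sumr; apply: eq_bigr => k _; ring.
Qed.

Lemma Qf_opt (R : realType) (V A : finType) (L : A -> nat -> R)
  (w : V -> A -> nat -> R) (psi : strategy R V A) (c : V -> V -> R) (g : V -> R)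
  (p : V -> A -> nat -> R) i a k :
  Qf L w psi c g p i a k = \sum_(j : option V) psi i j a k *
    (match j with Some j => L a k * c i j + p j a k | None => w i a k * g i + p i a k.+1 end).
Proof. by rewrite sum_option addrC. Qed.

Theorem theorem2 (R : realType) (V A : finType) (E : rel V) (dest : A -> V)
    (K : A -> nat) (L : A -> nat -> R) (w : V -> A -> nat -> R) (r : V -> A -> R)
    (D : V -> V -> R -> R) (Ddom : V -> V -> R -> Prop) (D' : V -> V -> R -> R)
    (C : V -> R -> R) (Cdom : V -> R -> Prop) (C' : V -> R -> R)
    (phi : strategy R V A) (t : V -> A -> nat -> R) (p : V -> A -> nat -> R) :
  (forall i j, E i j -> E j i) ->
  (forall i j, connect E i j) ->
  (forall a k, (k <= K a)%N -> 0 < L a k) ->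
  (forall i a k, (k <= K a)%N -> 0 < w i a k) ->
  (forall i a, 0 <= r i a) ->
  (forall i j, E i j -> cost_fun (D i j) (Ddom i j) (D' i j)) ->
  (forall i, cost_fun (C i) (Cdom i) (C' i)) ->
  feasible E dest K L w r Ddom Cdom phi t ->
  is_marginal dest K L w D' C' phi t p ->
  (forall i j a k, (k <= K a)%N ->
     (0 < phi i j a k ->
        delta E K L w D' C' phi t p i j a k = min_delta E K L w D' C' phi t p i a k) /\
     (phi i j a k = 0 ->
        (min_delta E K L w D' C' phi t p i a k <= delta E K L w D' C' phi t p i j a k)%E)) ->
  forall (phi' : strategy R V A) (t' : V -> A -> nat -> R),
    feasible E dest K L w r Ddom Cdom phi' t' ->
    total_cost E K L w D C phi t <= total_cost E K L w D C phi' t'.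
Proof.
move=> _ _ _ _ _ HD HC [Hv Ht HDd HCd] [Hp1 Hp2 Hp3] Hkkt phi' t' [Hv' Ht' HDd' HCd'].
have Hv_ := Hv; have Hv'_ := Hv'.
case: Hv_ => Hv0 Hv1 Hv2 Hv3; case: Hv'_ => Hv0' Hv1' Hv2' Hv3'.
pose c := fun i j => D' i j (linkF K L phi t i j).
pose g := fun i => C' i (compG K w phi t i).
have QP : forall i a k, (k <= K a)%N -> Qf L w phi c g p i a k = p i a k.
  move=> i a k hk; rewrite /Qf /c /g.
  case: (ltnP k (K a)) => hk'.
    by rewrite (Hp3 i a k hk') addrC.
  have ek : k = K a by apply/eqP; rewrite eqn_leq hk hk'.
  by rewrite ek Hp2 Hv2 mul0r addr0.
have QP' : forall i a k, (k <= K a)%N -> p i a k <= Qf L w phi' c g p i a k.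
  move=> i a k hk; rewrite -{1}(QP i a k hk) !Qf_opt.
  set dr := fun j : option V => match j with
     | Some j => L a k * c i j + p j a k | None => w i a k * g i + p i a k.+1 end.
  set cond := fun j : option V => match j with Some j => E i j | None => (k < K a)%N end.
  have hdel : forall j, delta E K L w D' C' phi t p i j a k =
      (if cond j then (dr j)%:E else +oo%E) by case.
  apply: (@kkt _ _ dr cond).
  - by move=> j; case/andP: (Hv0 i j a k hk).
  - by move=> j; case/andP: (Hv0' i j a k hk).
  - case=> [j|] /= hc; first by rewrite Hv1.
    have ek : k = K a by apply/eqP; rewrite eqn_leq hk leqNgt.
    by rewrite ek Hv2.
  - case=> [j|] /= hc; first by rewrite Hv1'.
    have ek : k = K a by apply/eqP; rewrite eqn_leq hk leqNgt.
    by rewrite ek Hv2'.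
  - by rewrite Hv3 // Hv3'.
  - move=> j pj; have [H _] := Hkkt i j a k hk; move: (H pj).
    rewrite hdel /min_delta => ->; apply: eq_bigr => j' _; exact: hdel.
have hA : \sum_(i : V) \sum_(j : V) c i j * linkF K L phi t i j
          + \sum_(i : V) g i * compG K w phi t i = \sum_(a : A) \sum_(i : V) r i a * p i a 0%N.
  rewrite (@lin_ident _ _ _ K L w r phi t c g p Hv2 Ht); apply: eq_bigr => a _.
  rewrite [X in _ + X]big1 ?addr0 // => k _; apply: big1 => i _.
  by rewrite QP ?subrr ?mulr0 // -ltnS ltn_ord.
have hB : \sum_(a : A) \sum_(i : V) r i a * p i a 0%N <=
          \sum_(i : V) \sum_(j : V) c i j * linkF K L phi' t' i j
          + \sum_(i : V) g i * compG K w phi' t' i.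
  rewrite (@lin_ident _ _ _ K L w r phi' t' c g p Hv2' Ht'); apply: ler_sum => a _.
  rewrite lerDl; apply: sumr_ge0 => k _; apply: sumr_ge0 => i _.
  have hk : (k <= K a)%N by rewrite -ltnS ltn_ord.
  case: Ht' => Ht0 _ _.
  by rewrite mulr_ge0 ?Ht0 // subr_ge0 QP'.
have hE : forall psi s, valid_strategy E dest K psi ->
    \sum_(i : V) \sum_(j : V | E i j) c i j * linkF K L psi s i j =
    \sum_(i : V) \sum_(j : V) c i j * linkF K L psi s i j.
  move=> psi s vp; apply: eq_bigr => i _; rewrite big_mkcond; apply: eq_bigr => j _.
  by case: ifP => // /negbT nE; rewrite (@linkF0 _ _ _ _ _ _ L _ s _ _ vp nE) mulr0.
have hD : \sum_(i : V) \sum_(j : V | E i j) (D i j (linkF K L phi t i j)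
            + c i j * (linkF K L phi' t' i j - linkF K L phi t i j))
          <= \sum_(i : V) \sum_(j : V | E i j) D i j (linkF K L phi' t' i j).
  apply: ler_sum => i _; apply: ler_sum => j e.
  exact: (@grad _ _ _ _ _ _) (HD i j e) (HDd i j e) (HDd' i j e).
have hC : \sum_(i : V) (C i (compG K w phi t i)
            + g i * (compG K w phi' t' i - compG K w phi t i))
          <= \sum_(i : V) C i (compG K w phi' t' i).
  apply: ler_sum => i _; exact: (@grad _ _ _ _ _ _) (HC i) (HCd i) (HCd' i).
have sD : \sum_(i : V) \sum_(j : V | E i j) (D i j (linkF K L phi t i j)
            + c i j * (linkF K L phi' t' i j - linkF K L phi t i j)) =
   \sum_(i : V) \sum_(j : V | E i j) D i j (linkF K L phi t i j)
   + (\sum_(i : V) \sum_(j : V | E i j) c i j * linkF K L phi' t' i j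
      - \sum_(i : V) \sum_(j : V | E i j) c i j * linkF K L phi t i j).
  rewrite -sumrB -big_split /=; apply: eq_bigr => i _.
  rewrite -sumrB -big_split /=; apply: eq_bigr => j _ /=; ring.
have sC : \sum_(i : V) (C i (compG K w phi t i)
            + g i * (compG K w phi' t' i - compG K w phi t i)) =
   \sum_(i : V) C i (compG K w phi t i)
   + (\sum_(i : V) g i * compG K w phi' t' i - \sum_(i : V) g i * compG K w phi t i).
  rewrite -sumrB -big_split /=; apply: eq_bigr => i _ /=; ring.
rewrite sD (hE _ _ Hv) (hE _ _ Hv') in hD.
rewrite sC in hC.
rewrite /total_cost.
lra.
Qed.
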